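(* Consider the one-stage adversarial networked control (ANC) game described in the context, and suppose that for every $x\in\mathbb{R}^n$ and every $a\in\mathcal{A}$ the functions $u\mapsto\Sigma(F(x,0),u,a)$ and $u\mapsto\Sigma(F(x,u),u,a)$ are continuous, coercive and convex functions $\mathbb{R}^m\to\mathbb{R}$. Then for every initial pair $(x,s)\in\mathbb{R}^n\times\mathcal{F}$ the game has a finite value, $-\infty<J_1=J_2<\infty$, and the game has a (possibly non-unique) saddle point $(u^*,p^* )$. Furthermore, for every $x$ there exists a compact set $U(x)\subset\mathbb{R}^m$ which contains the controller's optimal response $u^*=u^*(x,s)$ and is such that \[ J_1=\inf_{u\in U(x)}\sup_{p\in\mathcal{S}_{N-1}}p'h^{x,s}(u)=\sup_{p\in\mathcal{S}_{N-1}}\inf_{u\in U(x)}p'h^{x,s}(u)=J_2 . \]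
   Context: Setting (one-stage ANC game). Let $\mathcal{F}=\{1,\dots,|\mathcal{F}|\}$ be a finite set of transmission regimes and $\mathcal{A}=\{1,\dots,N\}$ a finite set of jammer actions. For each $a\in\mathcal{A}$ let $P(a)$ be an $|\mathcal{F}|\times|\mathcal{F}|$ row-stochastic matrix, and let $q=(q_1,\dots,q_{|\mathcal{F}|})'\in[0,1]^{|\mathcal{F}|}$. Let $F:\mathbb{R}^n\times\mathbb{R}^m\to\mathbb{R}^n$, $\sigma^0:\mathbb{R}^n\times\mathbb{R}^m\to\mathbb{R}$, $\sigma^1:\mathbb{R}^n\to\mathbb{R}$ and $g^0:\mathcal{A}\times\mathcal{F}\to\mathbb{R}$ be given. For a given plant state $x\in\mathbb{R}^n$ and link regime $s\in\mathcal{F}$, the controller chooses $u\in\mathbb{R}^m$ and the jammer chooses a probability vector $p$ in the unit simplex $\mathcal{S}_{N-1}=\{p\in\mathbb{R}^N:p_j\ge0,\sum_jp_j=1\}$; an action $a\in\mathcal{A}$ is drawn according to $p$, then a new regime $s^+$ is drawn with $\mathrm{Pr}(s^+=i)=P_{si}(a)$, then $b\in\{0,1\}$ is drawn with $\mathrm{Pr}(b=1\mid s^+)=q_{s^+}$, and $x^+=F(x,bu)$. The payoff (cost to the controller, reward to the jammer) is $\Sigma(x^+,u,a)=\sigma^0(x,u)+\sigma^1(x^+)-g^0(a,s)$. Its expectation is $\mathbb{E}^{u,p}\Sigma(x^+,u,a)=p'h^{x,s}(u)$, where $h^{x,s}:\mathbb{R}^m\to\mathbb{R}^N$ has components $h^{x,s}_i(u)=(P(i)q)_s\,\Sigma(F(x,u),u,i)+(1-(P(i)q)_s)\,\Sigma(F(x,0),u,i)$,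 with $(P(i)q)_s$ the $s$-th entry of the vector $P(i)q$. The upper and lower values are $J_1=\inf_{u\in\mathbb{R}^m}\sup_{p\in\mathcal{S}_{N-1}}p'h^{x,s}(u)$ and $J_2=\sup_{p\in\mathcal{S}_{N-1}}\inf_{u\in\mathbb{R}^m}p'h^{x,s}(u)$. A saddle point is a pair $(u^*,p^* )\in\mathbb{R}^m\times\mathcal{S}_{N-1}$ with $p'h^{x,s}(u^* )\le(p^* )'h^{x,s}(u^* )\le(p^* )'h^{x,s}(u)$ for all $u\in\mathbb{R}^m$, $p\in\mathcal{S}_{N-1}$ (so that $(p^* )'h^{x,s}(u^* )=J_1=J_2$); $u^*$ is the controller's optimal response. A function $h:\mathbb{R}^m\to\mathbb{R}$ is coercive if there is $\eta:\mathbb{R}_+\to\mathbb{R}$ with $\lim_{y\to+\infty}\eta(y)=+\infty$ and $h(u)\ge\eta(\|u\|)$ for all $u$. *)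

(* Defs.v *)
(* R^k is represented by row vectors 'rV[R]_k (normed space with the sup norm;
   coercivity is independent of the choice of norm). *)
From HB Require Import structures.
From mathcomp Require Import all_boot all_order all_algebra.
From mathcomp Require Import all_classical all_reals all_analysis.
Set Implicit Arguments. Unset Strict Implicit. Unset Printing Implicit Defensive.
Import Order.TTheory GRing.Theory Num.Theory.
Import numFieldNormedType.Exports.
Local Open Scope classical_set_scope.
Local Open Scope ring_scope.

Definition simplex (R : realType) (N : nat) : set 'rV[R]_N :=
  [set p | (forall j, 0 <= p 0 j) /\ \sum_(j < N) p 0 j = 1].

Definition row_stochastic (R : realType) (K : nat) (M : 'M[R]_K) : Prop :=
  (forall i j, 0 <= M i j) /\ (forall i, \sum_(j < K) M i j = 1).

Definition convex_fun (R : realType) (m : nat) (f : 'rV[R]_m -> R) : Prop :=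
  forall (u v : 'rV[R]_m) (t : R), 0 <= t <= 1 ->
    f (t *: u + (1 - t) *: v) <= t * f u + (1 - t) * f v.

Definition coercive (R : realType) (m : nat) (f : 'rV[R]_m -> R) : Prop :=
  exists eta : R -> R,
    (eta y @[y --> +oo] --> +oo) /\ (forall u, eta `|u| <= f u).

Section ANC.
Variables (R : realType) (n m K N : nat).
Variables (F : 'rV[R]_n -> 'rV[R]_m -> 'rV[R]_n)
          (sigma0 : 'rV[R]_n -> 'rV[R]_m -> R)
          (sigma1 : 'rV[R]_n -> R)
          (g0 : 'I_N -> 'I_K -> R)
          (P : 'I_N -> 'M[R]_K) (q : 'cV[R]_K).

Definition Sigma (x : 'rV[R]_n) (s : 'I_K) (xp : 'rV[R]_n) (u : 'rV[R]_m)
  (a : 'I_N) : R :=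
  sigma0 x u + sigma1 xp - g0 a s.

Definition hfun (x : 'rV[R]_n) (s : 'I_K) (u : 'rV[R]_m) (i : 'I_N) : R :=
  (P i *m q) s 0 * Sigma x s (F x u) u i
  + (1 - (P i *m q) s 0) * Sigma x s (F x 0) u i.

Definition payoff (x : 'rV[R]_n) (s : 'I_K) (p : 'rV[R]_N) (u : 'rV[R]_m) : R :=
  \sum_(i < N) p 0 i * hfun x s u i.

Definition upper_value (x : 'rV[R]_n) (s : 'I_K) (U : set 'rV[R]_m) : \bar R :=
  ereal_inf [set ereal_sup [set (payoff x s p u)%:E | p in @simplex R N] | u in U].

Definition lower_value (x : 'rV[R]_n) (s : 'I_K) (U : set 'rV[R]_m) : \bar R :=
  ereal_sup [set ereal_inf [set (payoff x s p u)%:E | u in U] | p in @simplex R N].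

Definition saddle_point (x : 'rV[R]_n) (s : 'I_K) (us : 'rV[R]_m)
  (ps : 'rV[R]_N) : Prop :=
  @simplex R N ps /\
  forall (u : 'rV[R]_m) (p : 'rV[R]_N), @simplex R N p ->
    payoff x s p us <= payoff x s ps us <= payoff x s ps u.

End ANC.

(* Main.v *)
Require Import Defs.
From HB Require Import structures.
From mathcomp Require Import all_boot all_order all_algebra.
From mathcomp Require Import all_classical all_reals all_analysis.
From mathcomp Require Import lra.
Set Implicit Arguments. Unset Strict Implicit. Unset Printing Implicit Defensive.
Import Order.TTheory GRing.Theory Num.Theory.
Import numFieldNormedType.Exports.
Local Open Scope classical_set_scope.
Local Open Scope ring_scope.

Definition convexD (R : realType) m (D : set 'rV[R]_m) :=
  forall u v (t : R), 0 <= t <= 1 -> D u -> D v -> D (t *: u + (1 - t) *: v).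
Arguments convexD {R m}.

Lemma seg_cont (R : realType) m (u v : 'rV[R]_m) :
  continuous (fun s : R => s *: u + (1 - s) *: v).
Proof.
move=> s; apply: cvgD.
  by apply: cvgZr_tmp; exact: cvg_id.
apply: cvgZr_tmp; apply: cvgB; [exact: cvg_cst | exact: cvg_id].
Qed.

Lemma comb_lt (R : realType) (t a b c : R) :
  0 <= t <= 1 -> a < c -> b < c -> t * a + (1 - t) * b < c.
Proof.
move=> /andP[t0 t1] ac bc.
have aM : a <= Num.max a b by rewrite le_max lexx.
have bM : b <= Num.max a b by rewrite le_max lexx orbT.
have Mc : Num.max a b < c by rewrite gt_max ac bc.
have e1 : t * a <= t * Num.max a b by apply: ler_wpM2l.
have e2 : (1 - t) * b <= (1 - t) * Num.max a b by apply: ler_wpM2l; lra.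
lra.
Qed.

Lemma pair_key (R : realType) m (D : set 'rV[R]_m) (G H : 'rV[R]_m -> R) al u v :
  convexD D -> convex_fun G -> convex_fun H -> continuous G -> continuous H ->
  (forall w, D w -> al <= G w \/ al <= H w) -> D u -> D v -> H u < al -> G v < al ->
  (al - H u) / (G u - H u) <= (H v - al) / (H v - G v).
Proof.
move=> cD cG cH ctG ctH hyp Du Dv Hu Gv.
have Gu : al <= G u by case: (hyp u Du) => // /(lt_le_trans Hu); rewrite ltxx.
have Hv : al <= H v by case: (hyp v Dv) => // /(lt_le_trans Gv); rewrite ltxx.
have du : 0 < G u - H u by rewrite subr_gt0; exact: lt_le_trans Gu.
have dv : 0 < H v - G v by rewrite subr_gt0; exact: lt_le_trans Hv.
rewrite leNgt; apply/negP => ab.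
set a := (H v - al) / (H v - G v) in ab.
set b := (al - H u) / (G u - H u) in ab.
have a0 : 0 <= a by apply: divr_ge0; lra.
have b1 : b <= 1 by rewrite /b ler_pdivrMr //; lra.
set t0 := (a + b) / 2.
have [at0 t0b] : a < t0 /\ t0 < b by rewrite /t0; have := midf_lt ab; case.
have t01 : 0 <= t0 <= 1 by apply/andP; split; lra.
have ku : t0 * G u + (1 - t0) * H u < al.
  by move: t0b; rewrite /b ltr_pdivlMr //; lra.
have kv : t0 * G v + (1 - t0) * H v < al.
  by move: at0; rewrite /a ltr_pdivrMr //; lra.
pose w s := s *: u + (1 - s) *: v.
pose phi s := G (w s) - H (w s).
have phic : {within `[0, 1], continuous phi}.
  have cGw : continuous (G \o w) := fun s => continuous_comp (@seg_cont _ _ u v s) (ctG _).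
  have cHw : continuous (H \o w) := fun s => continuous_comp (@seg_cont _ _ u v s) (ctH _).
  have cphi : continuous ((G \o w) - (H \o w)) by move=> s; exact: (continuousB (cGw s) (cHw s)).
  by apply: continuous_subspaceT; exact: cphi.
have w0 : w 0 = v by rewrite /w scale0r add0r subr0 scale1r.
have w1 : w 1 = u by rewrite /w scale1r subrr scale0r addr0.
have [c c01 phic0] : exists2 c, c \in `[0, 1] & phi c = 0.
  apply: IVT => //; rewrite /phi w0 w1; apply/andP; split.
    by rewrite ge_min; apply/orP; left; lra.
  by rewrite le_max; apply/orP; right; lra.
have c01' : 0 <= c <= 1 by move: c01; rewrite in_itv.
have Dw : D (w c) by apply: cD.
have eq : G (w c) = H (w c) by apply/eqP; rewrite -subr_eq0 -phic0.
have Gw := cG u v c c01'. have Hw := cH u v c c01'.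
rewrite -/(w c) in Gw Hw.
have alw : al <= G (w c) by case: (hyp _ Dw) => //; rewrite eq.
have hc := comb_lt c01' ku kv.
case/andP: t01 => t00 t1; case/andP: c01' => c0 c1.
have e1 : t0 * G (w c) <= t0 * (c * G u + (1 - c) * G v) by apply: ler_wpM2l.
have e2 : (1 - t0) * H (w c) <= (1 - t0) * (c * H u + (1 - c) * H v).
  by apply: ler_wpM2l; lra.
rewrite -eq in e2.
lra.
Qed.

Lemma two_lemma (R : realType) m (D : set 'rV[R]_m) (G H : 'rV[R]_m -> R) al :
  convexD D -> convex_fun G -> convex_fun H -> continuous G -> continuous H ->
  (forall w, D w -> al <= G w \/ al <= H w) ->
  exists t : R, 0 <= t <= 1 /\ forall u, D u -> al <= t * G u + (1 - t) * H u.
Proof.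
move=> cD cG cH ctG ctH hyp.
case: (pselect (exists u, D u /\ H u < al)) => [[u0 [Du0 Hu0]]|none]; last first.
  exists 0; split; first by rewrite lexx ler01.
  move=> u Du; rewrite mul0r add0r subr0 mul1r.
  by rewrite leNgt; apply/negP => Hu; apply: none; exists u.
pose S := [set (al - H u) / (G u - H u) | u in [set u | D u /\ H u < al]].
have Gge u : D u -> H u < al -> al <= G u.
  by move=> Du Hu; case: (hyp u Du) => // /(lt_le_trans Hu); rewrite ltxx.
have Hge v : D v -> G v < al -> al <= H v.
  by move=> Dv Gv; case: (hyp v Dv) => // /(lt_le_trans Gv); rewrite ltxx.
have S0 : S !=set0 by exists ((al - H u0) / (G u0 - H u0)); exists u0.
have Sub : ubound S 1.
  move=> _ [u [Du Hu] <-].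
  have du : 0 < G u - H u by rewrite subr_gt0; exact: lt_le_trans (Gge u Du Hu).
  by rewrite ler_pdivrMr // mul1r; have := Gge u Du Hu; lra.
have hS : has_sup S by split => //; exists 1.
exists (sup S); split.
  apply/andP; split; last exact: ge_sup.
  have du : 0 < G u0 - H u0 by rewrite subr_gt0; exact: lt_le_trans (Gge u0 Du0 Hu0).
  apply: le_trans (sup_upper_bound hS _); last by exists u0.
  by apply: divr_ge0 => //; lra.
move=> u Du.
case: (ltP (H u) al) => Hu.
  have du : 0 < G u - H u by rewrite subr_gt0; exact: lt_le_trans (Gge u Du Hu).
  have : (al - H u) / (G u - H u) <= sup S by apply: sup_upper_bound => //; exists u.
  by rewrite ler_pdivrMr //; lra.
case: (ltP (G u) al) => Gu.
  have dv : 0 < H u - G u by rewrite subr_gt0; exact: lt_le_trans (Hge u Du Gu).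
  have : sup S <= (H u - al) / (H u - G u).
    apply: ge_sup => // _ [w [Dw Hw] <-].
    exact: (pair_key cD cG cH ctG ctH hyp Dw Du Hw Gu).
  by rewrite ler_pdivlMr //; lra.
have [s0 s1] : 0 <= sup S /\ sup S <= 1.
  split; last exact: ge_sup.
  have du : 0 < G u0 - H u0 by rewrite subr_gt0; exact: lt_le_trans (Gge u0 Du0 Hu0).
  apply: le_trans (sup_upper_bound hS _); last by exists u0.
  by apply: divr_ge0 => //; lra.
have e1 : sup S * al <= sup S * G u by apply: ler_wpM2l.
have e2 : (1 - sup S) * al <= (1 - sup S) * H u by apply: ler_wpM2l; lra.
lra.
Qed.

Lemma conv_sum (R : realType) m r (p : nat -> R) (h : nat -> 'rV[R]_m -> R) :
  (forall i, 0 <= p i) -> (forall i, convex_fun (h i)) ->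
  convex_fun (fun u => \sum_(i < r) p i * h i u).
Proof.
move=> p0 cvx u v t t01.
rewrite !mulr_sumr -big_split /=; apply: ler_sum => i _.
have := ler_wpM2l (p0 i) (cvx i u v t t01); lra.
Qed.

Lemma cont_sum (R : realType) m r (p : nat -> R) (h : nat -> 'rV[R]_m -> R) :
  (forall i, continuous (h i)) ->
  continuous (fun u => \sum_(i < r) p i * h i u).
Proof.
move=> ct; elim: r => [|r IH].
  have -> : (fun u : 'rV[R]_m => \sum_(i < 0) p i * h i u) = fun=> 0.
    by apply: funext => u; rewrite big_ord0.
  exact: cst_continuous.
have -> : (fun u => \sum_(i < r.+1) p i * h i u) =
    (fun u => \sum_(i < r) p i * h i u) + (fun u => p r * h r u).
  by apply: funext => u; rewrite big_ord_recr.
move=> x.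
have c0 : {for x, continuous (fun _ : 'rV[R]_m => p r)} by exact: cst_continuous.
have h1 := continuousM c0 (ct r x).
have h2 := continuousD (IH x) h1.
exact: h2.
Qed.

Lemma claim (R : realType) m (al : R) : forall N (D : set 'rV[R]_m)
  (h : nat -> 'rV[R]_m -> R),
  (forall i, convex_fun (h i)) -> (forall i, continuous (h i)) -> convexD D ->
  (forall u, D u -> exists2 i, (i < N.+1)%N & al <= h i u) ->
  exists p : nat -> R, [/\ forall i, 0 <= p i, \sum_(i < N.+1) p i = 1 &
     forall u, D u -> al <= \sum_(i < N.+1) p i * h i u].
Proof.
elim=> [|N IH] D h cvx ct cD hyp.
  exists (fun i => if i == 0%N then 1 else 0); split.
  - by move=> i; case: (i == 0%N) => //; rewrite ler01.
  - by rewrite big_ord1.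
  move=> u Du; rewrite big_ord1 /= mul1r.
  by case: (hyp u Du) => i; rewrite ltnS leqn0 => /eqP ->.
pose D' := D `&` [set u | h N.+1 u < al].
have cD' : convexD D'.
  move=> u v t t01 [Du Hu] [Dv Hv]; split; first exact: cD.
  by apply: le_lt_trans (cvx _ u v t t01) _; apply: comb_lt.
have hyp' : forall u, D' u -> exists2 i, (i < N.+1)%N & al <= h i u.
  move=> u [Du Hu]; case: (hyp u Du) => i.
  rewrite ltnS leq_eqVlt => /orP[/eqP -> |iN] hi; last by exists i.
  by move: (lt_le_trans Hu hi); rewrite ltxx.
have [p' [p'0 p'1 p'h]] := IH D' h cvx ct cD' hyp'.
pose G u := \sum_(i < N.+1) p' i * h i u.
have [t [t01 ht]] : exists t : R, 0 <= t <= 1 /\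
    forall u, D u -> al <= t * G u + (1 - t) * h N.+1 u.
  apply: two_lemma => //.
  - exact: conv_sum.
  - exact: cont_sum.
  move=> w Dw; case: (ltP (h N.+1 w) al) => Hw; last by right.
  by left; apply: p'h.
case/andP: t01 => t0 t1.
exists (fun i => if (i < N.+1)%N then t * p' i else if i == N.+1 then 1 - t else 0).
split.
- move=> i; case: ifP => _; first exact: mulr_ge0.
  by case: ifP => _; lra.
- rewrite big_ord_recr /= ltnn eqxx.
  under eq_bigr => i _ do rewrite ltn_ord.
  by rewrite -mulr_sumr p'1 mulr1 subrKC.
move=> u Du; rewrite big_ord_recr /= ltnn eqxx.
under eq_bigr => i _ do rewrite ltn_ord -mulrA.
by rewrite -mulr_sumr; exact: ht.
Qed.

Section BigMax.
Variables (R : realType) (I : eqType) (T : Type).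

Lemma bigmax_ge_seq (r : seq I) (f : I -> R) x0 i : i \in r ->
  f i <= \big[Num.max/x0]_(j <- r) f j.
Proof.
elim: r => [//|a r IH]; rewrite inE big_cons => /orP[/eqP ->|ir].
  by rewrite le_max lexx.
by rewrite le_max (IH ir) orbT.
Qed.

Lemma bigmax_ex_seq (r : seq I) (f : I -> R) x0 :
  \big[Num.max/x0]_(j <- r) f j = x0 \/ exists2 i, i \in r & \big[Num.max/x0]_(j <- r) f j = f i.
Proof.
elim: r => [|a r IH]; first by left; rewrite big_nil.
rewrite big_cons; case: (leP (f a) (\big[Num.max/x0]_(j <- r) f j)) => ha.
  case: IH => [->|[i ir ->]]; first by left.
  by right; exists i => //; rewrite inE ir orbT.
by right; exists a => //; rewrite inE eqxx.
Qed.
End BigMax.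

Lemma bigmax_cont (R : realType) m (I : eqType) (r : seq I)
  (f : I -> 'rV[R]_m -> R) (f0 : 'rV[R]_m -> R) :
  (forall i, continuous (f i)) -> continuous f0 ->
  continuous (fun u => \big[Num.max/f0 u]_(j <- r) f j u).
Proof.
move=> cf cf0; elim: r => [|a r IH].
  have -> : (fun u => \big[Num.max/f0 u]_(j <- [::]) f j u) = f0.
    by apply: funext => u; rewrite big_nil.
  exact: cf0.
have -> : (fun u => \big[Num.max/f0 u]_(j <- a :: r) f j u) =
   (f a) \max (fun u => \big[Num.max/f0 u]_(j <- r) f j u).
  by apply: funext => u; rewrite big_cons.
move=> x; exact: (continuous_max (cf a x) (IH x)).
Qed.

Lemma per_s (R : realType) m N (h : 'I_N.+1 -> 'rV[R]_m -> R) :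
  (forall i, convex_fun (h i)) -> (forall i, continuous (h i)) ->
  (forall A, exists Y : R, forall u, Y < `|u| -> A <= h ord0 u) ->
  exists (J : R) (us : 'rV[R]_m) (ps : 'rV[R]_N.+1),
    [/\ simplex ps, forall i, h i us <= J &
        forall u, J <= \sum_(i < N.+1) ps 0 i * h i u].
Proof.
move=> cvx ct hco.
pose M u := \big[Num.max/h ord0 u]_(i < N.+1) h i u.
have Mge i u : h i u <= M u by apply: bigmax_ge_seq; rewrite mem_index_enum.
have Mex u : exists i, M u = h i u.
  rewrite /M; by case: (bigmax_ex_seq (index_enum 'I_N.+1) (h^~ u) (h ord0 u)) => [->|[i _ ->]];
    [exists ord0 | exists i].
have Mc : continuous M by apply: bigmax_cont.
pose A := [set u | M u <= M 0].
have [Y HY] := hco (M 0 + 1).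
have Ab : forall u, A u -> `|u| <= Y.
  move=> u Au; rewrite leNgt; apply/negP => /HY hu.
  have := le_trans hu (Mge ord0 u); rewrite /A /= in Au; lra.
have cA : compact A.
  apply: bounded_closed_compact.
    exists Y; split; first exact: num_real.
    move=> y Yy u Au /=; apply: le_trans (Ab u Au) (ltW Yy).
  have -> : A = M @^-1` [set r | r <= M 0] by [].
  have cM := (continuous_closedP M).1 Mc.
  apply: cM; exact: closed_le.
have [us usA usmin] : exists2 c, c \in A & forall t, t \in A -> M c <= M t.
  apply: EVT_min_rV => //; first by exists 0; rewrite /A /=.
  exact: continuous_subspaceT.
have JM u : M us <= M u.
  case: (pselect (A u)) => Au; first by apply: usmin; rewrite inE.
  apply: le_trans (usmin 0 _) _; first by rewrite inE /A /=.
  by move: Au; rewrite /A /= => /negP; rewrite -ltNge => /ltW.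
pose h' (k : nat) := h (inord k).
have [p [p0 p1 ph]] : exists p : nat -> R, [/\ forall i, 0 <= p i, \sum_(i < N.+1) p i = 1 &
     forall u, setT u -> M us <= \sum_(i < N.+1) p i * h' i u].
  apply: claim.
  - by move=> i; exact: cvx.
  - by move=> i; exact: ct.
  - by move=> u v t _ _ _.
  move=> u _; have [i Mi] := Mex u; exists (nat_of_ord i) => //.
  by rewrite /h' inord_val -Mi.
exists (M us), us, (\row_(i < N.+1) p i); split.
- split; first by move=> j; rewrite mxE.
  by under eq_bigr => i _ do rewrite mxE.
- by move=> i; exact: Mge.
move=> u; under eq_bigr => i _ do rewrite mxE.
have := ph u I; congr (_ <= _); apply: eq_bigr => i _.
by rewrite /h' inord_val.
Qed.

Lemma values (R : realType) (n m K N : nat)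
  (F : 'rV[R]_n -> 'rV[R]_m -> 'rV[R]_n)
  (sigma0 : 'rV[R]_n -> 'rV[R]_m -> R) (sigma1 : 'rV[R]_n -> R)
  (g0 : 'I_N -> 'I_K -> R) (P : 'I_N -> 'M[R]_K) (q : 'cV[R]_K) x s
  (J : R) us ps (U : set 'rV[R]_m) :
  simplex ps -> (forall i, hfun F sigma0 sigma1 g0 P q x s us i <= J) ->
  (forall u, J <= payoff F sigma0 sigma1 g0 P q x s ps u) -> U us ->
  [/\ upper_value F sigma0 sigma1 g0 P q x s U = J%:E,
      lower_value F sigma0 sigma1 g0 P q x s U = J%:E &
      saddle_point F sigma0 sigma1 g0 P q x s us ps].
Proof.
move=> sps hb hc Uus.
have pb p : simplex p -> payoff F sigma0 sigma1 g0 P q x s p us <= J.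
  case=> p0 p1; rewrite /payoff.
  apply: le_trans (_ : \sum_(i < N) p 0 i * J <= J).
    by apply: ler_sum => i _; apply: ler_wpM2l.
  by rewrite -mulr_suml p1 mul1r.
split.
- apply/eqP; rewrite eq_le; apply/andP; split.
    apply: ge_ereal_inf; exists (ereal_sup [set (payoff F sigma0 sigma1 g0 P q x s p us)%:E | p in simplex (R:=R) (N:=N)]).
      by exists us.
    by apply: ge_ereal_sup => _ [p sp <-]; rewrite lee_fin; exact: pb.
  apply: le_ereal_inf_tmp => _ [u Uu <-].
  by apply: le_ereal_sup_tmp; exists (payoff F sigma0 sigma1 g0 P q x s ps u)%:E;
    [exists ps | rewrite lee_fin].
- apply/eqP; rewrite eq_le; apply/andP; split.
    apply: ge_ereal_sup => _ [p sp <-].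
    apply: ge_ereal_inf; exists (payoff F sigma0 sigma1 g0 P q x s p us)%:E.
      by exists us.
    by rewrite lee_fin; exact: pb.
  apply: le_ereal_sup_tmp; exists (ereal_inf [set (payoff F sigma0 sigma1 g0 P q x s ps u)%:E | u in U]).
    by exists ps.
  by apply: le_ereal_inf_tmp => _ [u Uu <-]; rewrite lee_fin.
- split => // u p sp; apply/andP; split.
    exact: le_trans (pb p sp) (hc us).
  exact: le_trans (pb ps sps) (hc u).
Qed.

Unset Implicit Arguments.

Theorem theorem1 (R : realType) (n m K N : nat)
  (F : 'rV[R]_n -> 'rV[R]_m -> 'rV[R]_n)
  (sigma0 : 'rV[R]_n -> 'rV[R]_m -> R) (sigma1 : 'rV[R]_n -> R)
  (g0 : 'I_N -> 'I_K -> R) (P : 'I_N -> 'M[R]_K) (q : 'cV[R]_K) :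
  (0 < N)%N ->
  (forall a, row_stochastic (P a)) ->
  (forall i, 0 <= q i 0 <= 1) ->
  (forall (x : 'rV[R]_n) (s : 'I_K) (a : 'I_N),
     let f0 := fun u => Sigma sigma0 sigma1 g0 x s (F x 0) u a in
     let f1 := fun u => Sigma sigma0 sigma1 g0 x s (F x u) u a in
     [/\ continuous f0, coercive f0 & convex_fun f0] /\
     [/\ continuous f1, coercive f1 & convex_fun f1]) ->
  forall x : 'rV[R]_n, exists U : set 'rV[R]_m, compact U /\
    forall s : 'I_K, exists (J : R) (us : 'rV[R]_m) (ps : 'rV[R]_N),
      [/\ upper_value F sigma0 sigma1 g0 P q x s setT = J%:E,
          lower_value F sigma0 sigma1 g0 P q x s setT = J%:E &
          saddle_point F sigma0 sigma1 g0 P q x s us ps] /\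
      [/\ U us,
          upper_value F sigma0 sigma1 g0 P q x s U = J%:E &
          lower_value F sigma0 sigma1 g0 P q x s U = J%:E].
Proof.
move=> N0 Pst q01 hf x.
have key : forall s : 'I_K, exists t : R * 'rV[R]_m * 'rV[R]_N,
    [/\ simplex t.2, forall i, hfun F sigma0 sigma1 g0 P q x s t.1.2 i <= t.1.1 &
        forall u, t.1.1 <= payoff F sigma0 sigma1 g0 P q x s t.2 u].
  move=> s.
  case: N g0 P N0 Pst hf => [//|N'] g0 P _ Pst hf.
  pose c (i : 'I_N'.+1) := (P i *m q) s 0.
  have c01 i : 0 <= c i <= 1.
    rewrite /c mxE; apply/andP; split.
      apply: sumr_ge0 => j _; apply: mulr_ge0; first by case: (Pst i) => + _; apply.
      by case/andP: (q01 j).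
    case: (Pst i) => P0 P1; rewrite -(P1 s); apply: ler_sum => j _.
    rewrite -[leRHS]mulr1; apply: ler_wpM2l; first exact: P0.
    by case/andP: (q01 j).
  pose f0 i u := Sigma sigma0 sigma1 g0 x s (F x 0) u i.
  pose f1 i u := Sigma sigma0 sigma1 g0 x s (F x u) u i.
  have hE i u : hfun F sigma0 sigma1 g0 P q x s u i = c i * f1 i u + (1 - c i) * f0 i u by [].
  have [J [us [ps [sps hb hc]]]] :
      exists (J : R) (us : 'rV[R]_m) (ps : 'rV[R]_N'.+1),
      [/\ simplex ps, forall i, (fun i u => hfun F sigma0 sigma1 g0 P q x s u i) i us <= J &
        forall u, J <= \sum_(i < N'.+1) ps 0 i * (fun i u => hfun F sigma0 sigma1 g0 P q x s u i) i u].
    apply: per_s.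
    - move=> i u v t t01 /=; rewrite !hE.
      have [[_ _ cv0] [_ _ cv1]] := hf x s i.
      have e1 := cv1 u v t t01; have e0 := cv0 u v t t01.
      case/andP: (c01 i) => ci0 ci1.
      have e1' := ler_wpM2l ci0 e1.
      have e0' : (1 - c i) * f0 i (t *: u + (1 - t) *: v) <=
                 (1 - c i) * (t * f0 i u + (1 - t) * f0 i v).
        by apply: ler_wpM2l => //; lra.
      rewrite /f0 /f1 in e0' e1' *; lra.
    - move=> i u /=.
      have [[ct0 _ _] [ct1 _ _]] := hf x s i.
      have k0 : {for u, continuous (fun=> c i)} by exact: cst_continuous.
      have k1 : {for u, continuous (fun=> 1 - c i)} by exact: cst_continuous.
      have := continuousD (continuousM k0 (ct1 u)) (continuousM k1 (ct0 u)).
      by [].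
    - move=> A.
      have [[_ [e0 [l0 b0]] _] [_ [e1 [l1 b1]] _]] := hf x s ord0.
      have [Y0 [_ HY0]] := (cvgryPge e0).1 l0 A.
      have [Y1 [_ HY1]] := (cvgryPge e1).1 l1 A.
      exists (Num.max Y0 Y1) => u; rewrite gt_max => /andP[u0 u1] /=.
      rewrite hE.
      have a0 : A <= f0 ord0 u := le_trans (HY0 _ u0) (b0 u).
      have a1 : A <= f1 ord0 u := le_trans (HY1 _ u1) (b1 u).
      case/andP: (c01 ord0) => ci0 ci1.
      have e1' := ler_wpM2l ci0 a1.
      have e0' : (1 - c ord0) * A <= (1 - c ord0) * f0 ord0 u by apply: ler_wpM2l => //; lra.
      lra.
  by exists (J, us, ps); split.
have [f Hf] := choice key.
exists (range (fun s => (f s).1.2)); split.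
  by apply: finite_compact; apply: finite_image; exact: finite_finset.
move=> s; have [sps hb hc] := Hf s.
exists (f s).1.1, (f s).1.2, (f s).2.
have [u1 l1 sp] := values (U := setT) sps hb hc I.
have [u2 l2 _] := values (U := range (fun s => (f s).1.2)) sps hb hc (ex_intro2 _ _ s I erefl).
by split; split.
Qed.
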